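(* Let $G$ be a finite simple graph. Then the independence attractor $\mathcal{A}(G)$ of $G$ is not a circle.
   Context: For a finite simple graph $G$, an independent set is a set of pairwise non-adjacent vertices. The independence polynomial is $I_G(z)=\sum_{i=0}^{\alpha} a_i z^i$, where $a_i$ is the number of independent sets of cardinality $i$ (so $a_0=1$) and $\alpha$ (the independence number) is the largest cardinality of an independent set. The lexicographic product $G[H]$ has vertex set $V(G)\times V(H)$, with $(u,v)\sim(u',v')$ iff $u\sim u'$ in $G$, or $u=u'$ and $v\sim v'$ in $H$. Let $G^1=G$ and $G^{m}=G[G^{m-1}]$ denote the $m$-fold lexicographic product of $G$ with itself. The independence attractor is $\mathcal{A}(G)=\lim_{m\to\infty}\{z\in\mathbb{C}: I_{G^m}(z)=0\}$, the limit taken in the Hausdorff metric on nonempty compact subsets of $\mathbb{C}$. (Equivalently, with $P_G=I_G-1$, $\mathcal{A}(G)=\lim_{m\to\infty}\{z: P_G^m(z)=-1\}$, where $P_G^m$ is the $m$-th iterate.) *)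

(* Defs.v *)
From HB Require Import structures.
From mathcomp Require Import all_boot all_order all_algebra.
From mathcomp Require Import complex.
From mathcomp Require Import reals.

Set Implicit Arguments.
Unset Strict Implicit.
Unset Printing Implicit Defensive.

Import Order.TTheory GRing.Theory Num.Theory.
Local Open Scope ring_scope.

Definition simple_graph (T : finType) (e : rel T) : Prop :=
  symmetric e /\ irreflexive e.

Definition independent (T : finType) (e : rel T) (S : {set T}) : bool :=
  [forall x in S, forall y in S, ~~ e x y].

Definition indep_poly_eval (T : finType) (e : rel T) (F : comNzRingType) (z : F) : F :=
  \sum_(S : {set T} | independent e S) z ^+ #|S|.

(* Adjacency of the m-fold lexicographic power G^m on vertex sequences
   (x_1, ..., x_m): G^m = G[G^(m-1)], i.e. (u,v) ~ (u',v') iff u ~ u' in G,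
   or u = u' and v ~ v' in G^(m-1). *)
Fixpoint lex_adj (T : eqType) (e : rel T) (x y : seq T) : bool :=
  match x, y with
  | a :: x', b :: y' => e a b || ((a == b) && lex_adj e x' y')
  | _, _ => false
  end.

Definition lex_pow_rel (T : finType) (e : rel T) (m : nat) : rel (m.-tuple T) :=
  fun x y => lex_adj e (tval x) (tval y).

Definition lex_pow_roots (R : realType) (T : finType) (e : rel T) (m : nat)
    (z : R[i]) : Prop :=
  indep_poly_eval (@lex_pow_rel T e m) z = 0.

Definition hausdorff_converges (R : realType) (A : nat -> R[i] -> Prop)
    (L : R[i] -> Prop) : Prop :=
  forall eps : R, 0 < eps -> exists N : nat, forall m : nat, (N <= m)%N ->
    (forall z, A m z -> exists2 w, L w & `|z - w| < (eps%:C)%C) /\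
    (forall w, L w -> exists2 z, A m z & `|z - w| < (eps%:C)%C).

Definition circle (R : realType) (c : R[i]) (r : R) : R[i] -> Prop :=
  fun z => `|z - c| = (r%:C)%C.

(* Main.v *)
Require Import Defs.
From HB Require Import structures.
From mathcomp Require Import all_boot all_order all_algebra.
From mathcomp Require Import complex.
From mathcomp Require Import reals.
Import Order.TTheory GRing.Theory Num.Theory.
Local Open Scope ring_scope.
From mathcomp Require Import ring lra.

Set Implicit Arguments.
Unset Strict Implicit.
Unset Printing Implicit Defensive.
Lemma indepP (T : finType) (e : rel T) (S : {set T}) :
  reflect (forall x y, x \in S -> y \in S -> ~~ e x y) (independent e S).
Proof.
apply: (iffP forallP) => [H x y xS yS | H x].
  by move: (H x); rewrite xS /= => /forallP /(_ y); rewrite yS.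
by apply/implyP => xS; apply/forallP => y; apply/implyP => yS; apply: H.
Qed.

Lemma indep_transfer (F : comNzRingType) (A B : finType) (r : rel A) (s : rel B)
   (phi : A -> B) (z : F) :
  bijective phi -> (forall x y, s (phi x) (phi y) = r x y) ->
  indep_poly_eval s z = indep_poly_eval r z.
Proof.
move=> [psi phiK psiK] Hs.
rewrite /indep_poly_eval.
have hbij : {on [pred S : {set B} | independent s S],
               bijective (fun S : {set A} => phi @: S)}.
  exists (fun S : {set B} => psi @: S) => S _.
    by rewrite -imset_comp (eq_imset _ phiK) imset_id.
  by rewrite -imset_comp (eq_imset _ psiK) imset_id.
rewrite (reindex _ hbij) /=.
have phiI : injective phi by exact: can_inj phiK.
apply: eq_big => S; last by rewrite card_imset.
apply/indepP/indepP => H x y.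
  by move=> xS yS; rewrite -Hs; apply: H; apply: imset_f.
move=> /imsetP [x' x'S ->] /imsetP [y' y'S ->]; rewrite Hs; exact: H.
Qed.

Section Lex.
Variables (T U : finType) (e : rel T) (f : rel U).
Definition lexr : rel (T * U) := fun p q => e p.1 q.1 || ((p.1 == q.1) && f p.2 q.2).
Definition toSet (g : {ffun T -> {set U}}) : {set T * U} := [set p | p.2 \in g p.1].
Definition ofSet (S : {set T * U}) : {ffun T -> {set U}} := [ffun a => [set x | (a, x) \in S]].
Definition supp (g : {ffun T -> {set U}}) : {set T} := [set a | g a != set0].

Lemma toSetK : cancel toSet ofSet.
Proof. by move=> g; apply/ffunP => a; apply/setP => x; rewrite ffunE !inE. Qed.
Lemma ofSetK : cancel ofSet toSet.
Proof. by move=> S; apply/setP => [[a x]]; rewrite !inE ffunE inE. Qed.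

Lemma indep_toSet g : independent lexr (toSet g) =
  independent e (supp g) && [forall a, independent f (g a)].
Proof.
apply/indepP/andP => [H | [/indepP H1 /forallP H2]].
  split.
    apply/indepP => a b; rewrite !inE => /set0Pn [x xa] /set0Pn [y yb].
    have := H (a, x) (b, y); rewrite !inE /= => /(_ xa yb).
    by rewrite /lexr /= negb_or => /andP [].
  apply/forallP => a; apply/indepP => x y xa ya.
  have := H (a, x) (a, y); rewrite !inE /= => /(_ xa ya).
  by rewrite /lexr /= eqxx /= negb_or => /andP [].
move=> [a x] [b y]; rewrite !inE /= => xa yb.
have suppa : a \in supp g by rewrite inE; apply/set0Pn; exists x.
have suppb : b \in supp g by rewrite inE; apply/set0Pn; exists y.
rewrite /lexr /= negb_or (H1 a b suppa suppb) /=.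
apply/negP => /andP [/eqP eab fxy]; subst b.
by move/indepP: (H2 a) => /(_ x y xa yb); rewrite fxy.
Qed.

Lemma card_toSet g : #|toSet g| = (\sum_a #|g a|)%N.
Proof.
rewrite -sum1_card.
rewrite (eq_bigl (fun p : T * U => predT p.1 && (p.2 \in g p.1))); last first.
  by move=> [a x]; rewrite !inE.
rewrite -(pair_big_dep predT (fun a x => x \in g a) (fun _ _ => 1%N)) /=.
by apply: eq_bigr => a _; rewrite sum1_card.
Qed.

Lemma lex_formula (F : comNzRingType) (z : F) :
  indep_poly_eval lexr z = indep_poly_eval e (indep_poly_eval f z - 1).
Proof.
rewrite /indep_poly_eval.
have hbij : {on [pred S | independent lexr S], bijective toSet}.
  by exists ofSet => S _; [apply: toSetK | apply: ofSetK].
rewrite (reindex _ hbij) /=.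
rewrite (partition_big supp (independent e)); last first.
  by move=> g; rewrite indep_toSet => /andP [].
apply: eq_bigr => X indX.
pose Q0 := fun (Y : {set U}) => independent f Y && (Y != set0).
pose Q := fun (_ : T) (Y : {set U}) => Q0 Y.
have -> : \sum_(S | independent f S) z ^+ #|S| - 1 = \sum_(Y | Q0 Y) z ^+ #|Y|.
  rewrite (bigD1 set0) /=; last by apply/indepP => x y; rewrite inE.
  rewrite cards0 expr0 addrC addrK; apply: eq_bigl => Y; by rewrite /Q0 andbC.
rewrite -prodr_const (big_distr_big_dep set0 (mem X) Q) /=.
apply: eq_big => g.
  apply/andP/pfamilyP => [[] | [/supportP Hs Hf]].
    rewrite indep_toSet => /andP [_ /forallP Hi] /eqP Hsupp; subst X.
    split.
      by apply/supportP => a; rewrite inE negbK => /eqP.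
    move=> a ga; have : a \in supp g := ga; rewrite inE => ga2; by rewrite unfold_in /Q /Q0 Hi.
  have Hsupp : supp g = X.
    apply/setP => a; rewrite inE; case: (boolP (a \in X)) => aX.
      by move: (Hf a aX); rewrite unfold_in /Q /Q0 => /andP [].
    by rewrite Hs // eqxx.
  split; last by rewrite Hsupp.
  rewrite indep_toSet Hsupp indX /=; apply/forallP => a.
  case: (boolP (a \in X)) => aX.
    by move: (Hf a aX); rewrite unfold_in /Q /Q0 => /andP [].
  by rewrite Hs //; apply/indepP => x y; rewrite inE.
move=> /andP [_ /eqP Hsupp].
rewrite card_toSet.
rewrite (big_morph (fun n : nat => z ^+ n) (fun a b => exprD z a b) (expr0 z)).
rewrite [LHS](bigID (fun a => a \in X)) /=.
rewrite [X in _ * X = _]big1 ?mulr1 //.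
move=> a aX; have : a \notin supp g by rewrite Hsupp.
by rewrite inE negbK => /eqP ->; rewrite cards0 expr0.
Qed.
End Lex.

Section Iter.
Variables (T : finType) (e : rel T) (F : comNzRingType).

Lemma lex_pow_succ m (z : F) :
  indep_poly_eval (@lex_pow_rel T e m.+1) z =
  indep_poly_eval e (indep_poly_eval (@lex_pow_rel T e m) z - 1).
Proof.
rewrite -(lex_formula e (@lex_pow_rel T e m)).
apply: (indep_transfer (phi := fun p : T * (m.-tuple T) => [tuple of p.1 :: p.2])).
  exists (fun t : m.+1.-tuple T => (thead t, [tuple of behead t])).
    by move=> [a t] /=; congr pair; apply: val_inj.
  by move=> t /=; rewrite [RHS]tuple_eta.
by [].
Qed.

Lemma lex_pow_one (z : F) : indep_poly_eval (@lex_pow_rel T e 1) z = indep_poly_eval e z.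
Proof.
apply: (indep_transfer (phi := fun a : T => [tuple a])).
  exists (fun t : 1.-tuple T => thead t) => //.
  by move=> t; case/tupleP: t => x t; rewrite theadE (tuple0 t); apply: val_inj.
by move=> x y; rewrite /lex_pow_rel /= andbF orbF.
Qed.

Definition Pf (z : F) := indep_poly_eval e z - 1.

Lemma lex_pow_iter m (z : F) :
  indep_poly_eval (@lex_pow_rel T e m.+1) z = 1 + iter m.+1 Pf z.
Proof.
elim: m => [|m IH]; first by rewrite lex_pow_one /= /Pf addrC subrK.
by rewrite lex_pow_succ IH addrAC subrr add0r iterS {2}/Pf [RHS]addrC subrK.
Qed.
End Iter.

Section StepCD.
Variables (T : finType) (e : rel T).

Definition pp (F : comNzRingType) : {poly F} :=
  \sum_(S : {set T} | independent e S && (S != set0)) 'X^#|S|.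

Lemma pp_horner (F : comNzRingType) (z : F) : (pp F).[z] = Pf e z.
Proof.
rewrite /pp horner_sum /Pf /indep_poly_eval.
rewrite [in RHS](bigD1 set0) /=; last by apply/indepP => x y; rewrite inE.
rewrite cards0 expr0 addrC addrK; apply: eq_big => [S|S _]; first by rewrite andbC.
by rewrite hornerXn.
Qed.

Lemma pp_coef (F : comNzRingType) j :
  (pp F)`_j = \sum_(S : {set T} | independent e S && (S != set0)) ((j == #|S|)%:R : F).
Proof. by rewrite /pp coef_sum; apply: eq_bigr => S _; rewrite coefXn. Qed.

Lemma pp_coef0 (F : comNzRingType) : (pp F)`_0 = 0.
Proof.
rewrite pp_coef big1 // => S /andP [_ SN0].
by rewrite eq_sym cards_eq0 (negbTE SN0).
Qed.

Lemma singleton_indep : irreflexive e -> forall x, independent e [set x].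
Proof. by move=> irr x; apply/indepP => y z; rewrite !inE => /eqP -> /eqP ->; rewrite irr. Qed.

Lemma pp_coef1 (F : comNzRingType) : irreflexive e -> (pp F)`_1 = #|T|%:R.
Proof.
move=> irr; rewrite pp_coef big_mkcond /=.
rewrite (bigID (fun S : {set T} => #|S| == 1%N)) /=.
rewrite [X in _ + X]big1 ?addr0; last first.
  move=> S /negbTE S1; case: ifP => // _; rewrite eq_sym; by move: S1; case: (#|S| == 1%N).
rewrite big_cards1 -sumr_const; apply: eq_bigr => x _.
rewrite singleton_indep //= cards1 eqxx.
by have -> : ([set x] != set0) by apply/set0Pn; exists x; rewrite inE.
Qed.

Lemma edgeless_eval (F : idomainType) (z : F) :
  independent e setT -> indep_poly_eval e z = (1 + z) ^+ #|T|.
Proof.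
move=> /indepP Hall.
have -> : indep_poly_eval e z = \sum_(S : {set T}) z ^+ #|S|.
  apply: eq_bigl => S; apply/indepP => x y _ _; apply: Hall; by rewrite inE.
have -> : (1 + z) ^+ #|T| = \prod_(i : T) (z + 1) by rewrite prodr_const addrC.
rewrite (bigA_distr _ _ (fun _ : T => z) (fun _ : T => 1)).
apply: eq_bigr => S _.
by rewrite -big_mkcond /= prodr_const.
Qed.

Lemma edgeless_root (F : idomainType) (z : F) :
  independent e setT -> indep_poly_eval e z = 0 -> z = -1.
Proof.
move=> Hs; rewrite edgeless_eval // => /eqP; rewrite expf_eq0 => /andP [_].
by rewrite addrC addr_eq0 => /eqP.
Qed.

Lemma edgeless_iter (F : idomainType) j (z : F) :
  independent e setT -> iter j (@Pf T e F) z = -1 -> z = -1.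
Proof.
move=> Hs; elim: j z => [//|j IH] z /=.
rewrite {1}/Pf => /eqP; rewrite subr_eq addrC subrr => /eqP H.
by apply: IH; apply: edgeless_root.
Qed.
End StepCD.

Section StepC.
Variables (T : finType) (e : rel T) (C : numClosedFieldType).
Hypothesis irr : irreflexive e.

Lemma setn_le1 : (#|T| <= 1)%N -> independent e setT.
Proof.
move=> /fintype_le1P H; apply/indepP => x y _ _.
by rewrite (H x y) irr.
Qed.

Lemma setK k : (pp e C)`_k != 0 -> k = #|T| -> independent e setT.
Proof.
move=> Hk kn.
case: (pickP (fun S : {set T} => independent e S && (S != set0) && (k == #|S|))) => [S | none].
  move=> /andP [/andP [HS _] /eqP kS].
  suff -> : setT = S by [].
  by apply/eqP; rewrite eq_sym eqEcard subsetT cardsT -kS kn leqnn.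
move: Hk; rewrite pp_coef big1 ?eqxx // => S HS.
by have := none S; rewrite HS /= => ->.
Qed.

Lemma rigid_consequence (c b : C) k : b != 0 -> (k = 1%N -> `|b| = 1) ->
  pp e C = c%:P + b *: ('X - c%:P) ^+ k -> independent e setT.
Proof.
move=> bN0 b1 Hp.
have E1 := pp_coef1 C irr; have E0 := pp_coef0 e C.
rewrite Hp coefD coefZ coefC /= add0r in E1.
rewrite Hp coefD coefZ coefC /= in E0.
case: k b1 Hp E0 E1 => [|k] b1 Hp E0 E1.
  rewrite expr0 coefC /= mulr0 in E1.
  apply: setn_le1; move/eqP: E1; rewrite eq_sym pnatr_eq0 => /eqP ->; by [].
have c1 : (('X - c%:P) ^+ k.+1)`_1 = (- c) ^+ k *+ k.+1.
  have := coef_deriv (('X - c%:P) ^+ k.+1) 0; rewrite mulr1n => <-.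
  by rewrite deriv_exp derivXsubC mul1r /= -horner_coef0 hornerMn horner_exp hornerXsubC sub0r.
have c0 : (('X - c%:P) ^+ k.+1)`_0 = (- c) ^+ k.+1.
  by rewrite -horner_coef0 horner_exp hornerXsubC sub0r.
have ck : (pp e C)`_k.+1 = b.
  rewrite Hp coefD coefZ coefC /=.
  have := lead_coefE (('X - c%:P) ^+ k.+1).
  by rewrite size_exp_XsubC lead_coef_exp lead_coefXsubC expr1n /= => <-; rewrite mulr1 add0r.
rewrite c1 in E1; rewrite c0 in E0.
have [c0'|cN0] := eqVneq c 0.
  subst c; case: k b1 Hp E0 E1 c1 c0 ck => [|k] b1 Hp E0 E1 c1 c0 ck.
    rewrite expr0 mulr1 in E1.
    apply: setn_le1.
    have : `|(#|T|%:R : C)| = 1 by rewrite -E1 b1.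
    by rewrite normr_nat => /eqP; rewrite (eqr_nat C _ 1) => /eqP ->.
  rewrite oppr0 expr0n /= mul0rn mulr0 in E1.
  apply: setn_le1; move/eqP: E1; rewrite eq_sym pnatr_eq0 => /eqP ->; by [].
apply: (setK (k := k.+1)); first by rewrite ck.
have E0' : b * (- c) ^+ k.+1 = - c by apply/eqP; rewrite -addr_eq0 addrC E0.
have : (#|T|%:R - (k.+1)%:R) * (- c) = 0 :> C.
  rewrite -E1 -mulr_natr.
  transitivity ((b * (-c) ^+ k.+1 - (-c)) * (k.+1)%:R); first by rewrite exprS; ring.
  by rewrite E0' subrr mul0r.
move/eqP; rewrite mulf_eq0 oppr_eq0 (negbTE cN0) orbF subr_eq0 eqr_nat => /eqP ->.
by [].
Qed.
End StepC.

Lemma poly_ext (C : numDomainType) (p q : {poly C}) :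
  (forall x, p.[x] = q.[x]) -> p = q.
Proof.
move=> H; apply/eqP; rewrite -subr_eq0; apply/eqP.
apply: (@roots_geq_poly_eq0 _ _ [seq i%:R | i <- iota 0 (size (p - q))]).
- by apply/allP => x /mapP [i _ ->]; rewrite /root hornerD hornerN H subrr.
- by rewrite map_inj_in_uniq ?iota_uniq // => i j _ _ /eqP; rewrite eqr_nat => /eqP.
- by rewrite size_map size_iota.
Qed.

Section Unit.
Variable C : numClosedFieldType.

Lemma nat_subi_neq0 (t : nat) : (t%:R - 'i : C) != 0.
Proof.
apply/negP; rewrite subr_eq0 => /eqP H.
have H2 := congr1 (@Num.Def.conjC C) H; rewrite conjC_nat conjCi H in H2.
have : 'i *+ 2 == 0 :> C by rewrite mulr2n {1}H2 addNr.
by rewrite mulrn_eq0 /= (negbTE (neq0Ci C)).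
Qed.

Lemma nat_addi_neq0 (t : nat) : (t%:R + 'i : C) != 0.
Proof.
apply/negP => /eqP H.
have H2 := congr1 (@Num.Def.conjC C) H; rewrite rmorphD /= conjC_nat conjCi conjC0 in H2.
by move: (nat_subi_neq0 t); rewrite H2 eqxx.
Qed.

Definition upt (t : nat) : C := (t%:R + 'i) / (t%:R - 'i).

Lemma upt_unit t : upt t * (upt t)^* = 1.
Proof.
rewrite /upt rmorphM fmorphV rmorphD rmorphB /= conjC_nat conjCi /= opprK.
by rewrite mulrA divfK ?nat_subi_neq0 // divff // nat_addi_neq0.
Qed.

Lemma upt_inj : injective upt.
Proof.
move=> s t /eqP; rewrite /upt eqr_div ?nat_subi_neq0 // => /eqP H.
have : 'i *+ 2 * ((t%:R : C) - s%:R) = 0.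
  transitivity ((s%:R + 'i) * (t%:R - 'i) - (t%:R + 'i) * (s%:R - 'i) : C); first by ring.
  by rewrite H subrr.
move/eqP; rewrite mulf_eq0 mulrn_eq0 /= (negbTE (neq0Ci C)) /= subr_eq0 eqr_nat => /eqP ->.
by [].
Qed.
End Unit.

Lemma aux4 (C : comRingType) (A B U V : C) : A * B * (U * V) = B * U * (A * V).
Proof. ring. Qed.

Lemma prodX (C : idomainType) (r : seq C) : (forall z, z \in r -> z = 0) ->
  \prod_(z <- r) ('X - z%:P) = 'X^(size r).
Proof.
elim: r => [|z r IH] H; first by rewrite big_nil expr0.
rewrite big_cons IH => [|x xr]; last by apply: H; rewrite inE xr orbT.
by rewrite (H z) ?mem_head // subr0 /= exprS.
Qed.

Lemma rigidity (C : numClosedFieldType) (p : {poly C}) (c rho : C) : 0 < rho ->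
  (forall w, `|w - c| = rho -> `|p.[w] - c| = rho) ->
  exists b k, [/\ b != 0, (k = 1%N -> `|b| = 1) & p = c%:P + b *: ('X - c%:P) ^+ k].
Proof.
move=> rho0 Hc.
have rhoN0 : rho != 0 by rewrite gt_eqF.
pose q := rho^-1 *: (p \Po (c%:P + rho *: 'X) - c%:P).
have qE : forall u, q.[u] = rho^-1 * (p.[c + rho * u] - c).
  by move=> u; rewrite /q hornerZ hornerD hornerN horner_comp hornerD hornerC hornerZ hornerX.
have Hq : forall u, u * u^* = 1 -> `|q.[u]| = 1.
  move=> u uu; have nu : `|u| = 1 by apply/eqP; rewrite -sqrp_eq1 // normCK uu.
  rewrite qE normrM Hc; last by rewrite addrAC subrr add0r normrM nu mulr1 ger0_norm // ltW.
  by rewrite normrV ?unitfE // ger0_norm ?ltW // mulVf.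
have qN0 : q != 0.
  apply/negP => /eqP q0; have := Hq 1; rewrite rmorph1 mulr1 q0 horner0 normr0 => /(_ erefl) /eqP.
  by rewrite eq_sym oner_eq0.
pose d := (size q).-1.
pose s := \sum_(i < size q) (q`_i)^* *: 'X^(d - i).
have Hs : forall u, u * u^* = 1 -> s.[u] = u ^+ d * (q.[u])^*.
  move=> u uu; rewrite /s horner_sum horner_coef rmorph_sum mulr_sumr.
  apply: eq_bigr => i _; rewrite hornerZ hornerXn rmorphM rmorphXn /=.
  have id : (i <= d)%N by rewrite /d -ltnS prednK ?ltn_ord // (leq_ltn_trans (leq0n i) (ltn_ord i)).
  have -> : u ^+ d = u ^+ (d - i) * u ^+ i by rewrite -exprD subnK.
  transitivity ((q`_i)^* * u ^+ (d - i) * (u * u^*) ^+ i); first by rewrite uu expr1n mulr1.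
  by rewrite exprMn aux4.
pose h := q * s - 'X^d.
have Hh : h = 0.
  apply: (@roots_geq_poly_eq0 _ _ [seq upt C t | t <- iota 0 (size h)]).
  - apply/allP => x /mapP [t _ ->]; rewrite /root /h hornerD hornerN hornerM hornerXn Hs ?upt_unit //.
    by rewrite mulrCA -normCK Hq ?upt_unit // expr1n mulr1 subrr.
  - by rewrite map_inj_in_uniq ?iota_uniq // => a b _ _; exact: upt_inj.
  - by rewrite size_map size_iota.
have Hqs : q * s = 'X^d by apply/eqP; rewrite -subr_eq0 -/h Hh.
have [r Dq] := closed_field_poly_normal q.
have r0 : forall z, z \in r -> z = 0.
  move=> z zr.
  have qz : q.[z] = 0.
    apply/eqP; rewrite -/(root q z) Dq rootZ ?root_prod_XsubC //.
    by rewrite lead_coef_eq0.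
  have := congr1 (fun P => P.[z]) Hqs; rewrite /= hornerM qz mul0r hornerXn => /esym/eqP.
  by rewrite expf_eq0 => /andP [_ /eqP].
set b0 := lead_coef q; set k := size r.
have qb : forall u, q.[u] = b0 * u ^+ k.
  by move=> u; rewrite Dq prodX // hornerZ hornerXn.
have b01 : `|b0| = 1.
  by have := Hq 1; rewrite rmorph1 mulr1 qb expr1n mulr1 => ->.
have b0N0 : b0 != 0 by rewrite -normr_eq0 b01 oner_eq0.
exists (rho * b0 / rho ^+ k), k; split.
- by rewrite mulf_neq0 ?mulf_neq0 ?invr_eq0 ?expf_neq0.
- by move=> k1; rewrite k1 expr1 mulrAC divff ?mul1r.
apply: poly_ext => z.
have -> : p.[z] = c + rho * q.[(z - c) / rho].
  rewrite qE mulrA divff // mul1r mulrC divfK //.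
  by rewrite addrC subrK addrC subrK.
rewrite qb hornerD hornerC hornerZ horner_exp hornerXsubC expr_div_n.
congr (_ + _); by rewrite !mulrA [RHS]mulrAC.
Qed.

Lemma poly_lip (C : numDomainType) (p : {poly C}) (w : C) :
  exists L, 0 <= L /\ forall z, `|z - w| <= 1 -> `|p.[z] - p.[w]| <= L * `|z - w|.
Proof.
have : root (p - p.[w]%:P) w by rewrite /root hornerD hornerN hornerC subrr.
move=> /factor_theorem [q Hq].
exists (\sum_(i < size q) `|q`_i| * (`|w| + 1) ^+ i); split.
  by apply: sumr_ge0 => i _; rewrite mulr_ge0 // exprn_ge0 // addr_ge0.
move=> z hz.
have -> : p.[z] - p.[w] = q.[z] * (z - w).
  have <- : (p - p.[w]%:P).[z] = p.[z] - p.[w] by rewrite hornerD hornerN hornerC.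
  by rewrite Hq hornerM hornerXsubC.
rewrite normrM ler_wpM2r //.
rewrite horner_coef; apply: (le_trans (ler_norm_sum _ _ _)).
apply: ler_sum => i _; rewrite normrM normrX ler_wpM2l //.
apply: lerXn2r; rewrite ?qualifE /= ?addr_ge0 //.
have -> : z = w + (z - w) by rewrite addrC subrK.
by apply: (le_trans (ler_normD _ _)); rewrite lerD2l.
Qed.

Lemma real_vanish (R : realType) (a l : R) : 0 <= a -> 0 <= l ->
  (forall eps : R, 0 < eps -> eps <= 1 -> a <= (l + 1) * eps) -> a = 0.
Proof.
move=> a0 l0 H; apply/eqP; rewrite eq_le a0 andbT; apply/negP => /negP.
rewrite -ltNge => apos.
have l1 : 0 < l + 1 by rewrite ltr_wpDl.
pose eps := Num.min 1 (a / (2 * (l + 1))).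
have eps0 : 0 < eps by rewrite lt_min ltr01 /= divr_gt0 // mulr_gt0.
have eps1 : eps <= 1 by rewrite ge_min lexx.
have eps2 : eps <= a / (2 * (l + 1)) by rewrite ge_min lexx orbT.
have h1 := H eps eps0 eps1.
have h2 : (l + 1) * eps <= (l + 1) * (a / (2 * (l + 1))) by rewrite ler_wpM2l // ltW.
have h3 : (l + 1) * (a / (2 * (l + 1))) = a / 2.
  by field; rewrite gt_eqF.
lra.
Qed.

Unset Implicit Arguments.

Theorem theoremA (R : realType) (T : finType) (e : rel T) :
  simple_graph e ->
  ~ (exists (c : R[i]) (r : R), 0 < r /\
       hausdorff_converges (lex_pow_roots e) (circle c r)).
Proof.
move=> [_ irr] [c [r [r0 Hconv]]].
pose rho : R[i] := r%:C%C.
have rho0 : 0 < rho by rewrite ltcR.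
have ZE : forall m z, lex_pow_roots e m.+1 z <-> iter m.+1 (@Pf T e R[i]) z = -1.
  move=> m z; rewrite /lex_pow_roots lex_pow_iter; split => [/eqP|->].
    by rewrite addrC addr_eq0 => /eqP.
  by rewrite addrN.
have HA : forall w, `|w - c| = rho -> `|(pp e R[i]).[w] - c| = rho.
  move=> w hw; rewrite pp_horner.
  have [L [L0 HL]] := poly_lip (pp e R[i]) w.
  have Hb : forall eps : R, 0 < eps -> eps <= 1 ->
      `| `|Pf e w - c| - rho | <= (L + 1) * eps%:C%C.
    move=> eps e0 e1.
    have [N HN] := Hconv eps e0.
    have [_ H2] := HN N.+2 (leqW (leqnSn N)).
    have [H1 _] := HN N.+1 (leqnSn N).
    have [z Zz hz] := H2 w hw.
    have Zpz : lex_pow_roots e N.+1 (Pf e z).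
      by apply/ZE; move/ZE: Zz; rewrite iterSr.
    have [w' hw' hpz] := H1 _ Zpz.
    have hzw : `|z - w| <= 1.
      by apply: ltW; apply: (lt_le_trans hz); rewrite -[1]/(1%:C%C) lecR.
    have -> : rho = `|w' - c| by rewrite hw'.
    apply: le_trans (ler_dist_dist _ _) _.
    have -> : Pf e w - c - (w' - c) = Pf e w - w' by rewrite opprB addrA subrK.
    apply: le_trans (ler_distD (Pf e z) _ _) _.
    rewrite mulrDl mul1r; apply: lerD; last by apply: ltW.
    rewrite distrC -!pp_horner; apply: le_trans (HL _ hzw) _.
    by apply: ler_wpM2l => //; apply: ltW.
  set x := `|Pf e w - c| - rho.
  have xr : `|x| = (complex.Re `|x|)%:C%C by rewrite RRe_real // normr_real.
  have Lr : L = (complex.Re L)%:C%C by rewrite RRe_real // ger0_real.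
  have : complex.Re `|x| = 0.
    apply: (real_vanish (l := complex.Re L)).
    - by rewrite -ler0c -xr.
    - by rewrite -ler0c -Lr.
    move=> eps e0 e1; rewrite -lecR -xr.
    by have := Hb eps e0 e1; rewrite {1}Lr rmorphM rmorphD rmorph1.
  move=> x0; move: xr; rewrite x0 => /eqP; rewrite normr_eq0 subr_eq0 => /eqP.
  by [].
have [b [k [bN0 b1 Hp]]] := rigidity rho0 HA.
have Hset := rigid_consequence irr bN0 b1 Hp.
have Hr2 : 0 < r / 2 by rewrite divr_gt0.
have [N HN] := Hconv _ Hr2.
have [_ H2] := HN N.+1 (leqnSn N).
have c1 : circle c r (c + rho).
  by rewrite /circle addrAC subrr add0r ger0_norm // ltW.
have c2 : circle c r (c - rho).
  by rewrite /circle addrAC subrr add0r normrN ger0_norm // ltW.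
have [z1 Z1 h1] := H2 _ c1.
have [z2 Z2 h2] := H2 _ c2.
have z1E : z1 = -1 by apply: (@edgeless_iter T e R[i] N.+1 z1 Hset); apply/ZE.
have z2E : z2 = -1 by apply: (@edgeless_iter T e R[i] N.+1 z2 Hset); apply/ZE.
subst z1 z2.
have : `|(c + rho) - (c - rho)| < rho.
  apply: le_lt_trans (ler_distD (-1) _ _) _.
  rewrite [X in X + _]distrC.
  by apply: (lt_le_trans (ltrD h1 h2)); rewrite -rmorphD -splitr.
have -> : c + rho - (c - rho) = rho + rho by rewrite opprB [rho - c]addrC addrACA subrr add0r.
rewrite ger0_norm ?addr_ge0 ?ltW // -[X in _ < X]addr0 ltrD2l.
by move=> H; have := lt_trans rho0 H; rewrite ltxx.
Qed.
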